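(* Let $a_0,a_1,a_2,b_0,b_1$ be complex numbers with $a_1\neq 0$ and $a_2\neq 0$. Let $(T(n,k))_{n\ge 0,\,k\in\mathbb{Z}}$ be defined by $T(0,0)=1$, $T(0,k)=0$ for $k\neq 0$, $T(n,k)=0$ for $k<0$, and for $n\ge 1$ and all $k$, \[ T(n,k)=(a_2 n+a_1 k+a_0)\,T(n-1,k)+(b_1 k+b_0)\,T(n-1,k-1). \] Then for all integers $n,k\ge 0$, \[ T(n,k)=\frac{(b_0+b_1\,|\,b_1)^{(\overline{k})}}{a_1^k\,k!}\sum_{j=0}^{k}(-1)^{k-j}\binom{k}{j}\prod_{r=1}^{n}\bigl(a_0+a_1 j+r a_2\bigr). \]
   Context: For a number $x$, a step $a$ and an integer $k\ge 0$, $(x\,|\,a)^{(\overline{k})}=x(x+a)(x+2a)\cdots(x+(k-1)a)$, with $(x\,|\,a)^{(\overline{0})}=1$. Empty products equal $1$. *)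

(* Defs.v *)
From mathcomp Require Import all_boot all_order all_algebra.
From mathcomp Require Import complex.
From mathcomp Require Import reals.
Set Implicit Arguments. Unset Strict Implicit. Unset Printing Implicit Defensive.
Import Order.TTheory GRing.Theory Num.Theory.
Local Open Scope ring_scope.
Local Open Scope complex_scope.

Definition rising_step (F : pzRingType) (x a : F) (k : nat) : F :=
  \prod_(i < k) (x + i%:R * a).

Fixpoint Ttri (R : rcfType) (a0 a1 a2 b0 b1 : R[i]) (n : nat) (k : int)
  {struct n} : R[i] :=
  match n with
  | 0%N => if k == 0 then 1 else 0
  | m.+1 => if (k < 0)%R then 0 else
      (a2 * (m.+1)%:R + a1 * k%:~R + a0) * Ttri a0 a1 a2 b0 b1 m k
      + (b1 * k%:~R + b0) * Ttri a0 a1 a2 b0 b1 m (k - 1)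
  end.

(* Main.v *)
Require Import Defs.
From mathcomp Require Import all_boot all_order all_algebra.
From mathcomp Require Import complex reals.
From mathcomp Require Import ring.
Import Order.TTheory GRing.Theory Num.Theory.
Local Open Scope ring_scope.
Local Open Scope complex_scope.

Section S.
Variable R : realType.
Variables a0 a1 a2 b0 b1 : R[i].

Definition P (n j : nat) : R[i] :=
  \prod_(1 <= r < n.+1) (a0 + a1 * j%:R + r%:R * a2).
Definition S (n k : nat) : R[i] :=
  \sum_(j < k.+1) ((-1) ^+ (k - j) * ('C(k, j))%:R * P n j).

Lemma P_rec n j : P n.+1 j = (a0 + a1 * j%:R + n.+1%:R * a2) * P n j.
Proof. by rewrite /P big_nat_recr //= mulrC. Qed.

Lemma S0 k : S 0 k = (k == 0%N)%:R.
Proof.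
have -> : S 0 k = \sum_(j < k.+1) ((-1) ^+ (k - j) * (1:R[i]) ^+ j) *+ 'C(k, j).
  by apply: eq_bigr => j _; rewrite /P big_geq // mulr1 expr1n mulr1 mulr_natr.
by rewrite -exprDn addNr expr0n.
Qed.

Lemma key k (j : 'I_k.+2) :
  (-1) ^+ (k.+1 - j) * ('C(k.+1, j))%:R * (a1 * (j:nat)%:R) =
  (-1) ^+ (k.+1 - j) * ('C(k.+1, j))%:R * (a1 * (k.+1)%:R) +
  a1 * (k.+1)%:R * ((-1) ^+ (k - j) * ('C(k, j))%:R).
Proof.
case: (leqP j k) => hj.
  have h1 := mul_bin_down k.+1 j.
  have h2 : ((k.+1)%:R * ('C(k, j))%:R : R[i]) =
            ((k.+1)%:R - (j:nat)%:R) * ('C(k.+1, j))%:R.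
    by rewrite -natrB ?(leq_trans hj) // -!natrM /= h1.
  rewrite subSn // exprS.
  apply/eqP; rewrite -subr_eq0; apply/eqP.
  transitivity (a1 * (-1) ^+ (k - j) * (((k.+1)%:R - (j:nat)%:R) * ('C(k.+1, j))%:R
     - (k.+1)%:R * ('C(k, j))%:R)); first ring.
  by rewrite h2 subrr mulr0.
have -> : (j:nat) = k.+1 by apply/eqP; rewrite eqn_leq hj -ltnS ltn_ord.
by rewrite (@bin_small k k.+1) // !mulr0 addr0.
Qed.

Lemma S_rec n k : S n.+1 k.+1 =
  (a2 * (n.+1)%:R + a1 * (k.+1)%:R + a0) * S n k.+1 + a1 * (k.+1)%:R * S n k.
Proof.
have E : S n k = \sum_(j < k.+2) ((-1) ^+ (k - j) * ('C(k, j))%:R * P n j).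
  by rewrite big_ord_recr /= bin_small // mulr0 mul0r addr0.
rewrite E /S !mulr_sumr -big_split /=; apply: eq_bigr => j _.
rewrite P_rec.
have := key k j.
set s := (-1) ^+ _ * _; set t := (-1) ^+ (k - j) * _ => h.
have -> : s * ((a0 + a1 * (j:nat)%:R + (n.+1)%:R * a2) * P n j) =
  s * (a0 + (n.+1)%:R * a2) * P n j + s * (a1 * (j:nat)%:R) * P n j by ring.
rewrite h; ring.
Qed.

Lemma S_rec0 n : S n.+1 0 = (a2 * (n.+1)%:R + a0) * S n 0.
Proof.
rewrite /S !big_ord_recr !big_ord0 /= !add0r P_rec; ring.
Qed.

Lemma Tneg n m : Ttri a0 a1 a2 b0 b1 n (Negz m) = 0.
Proof. by case: n. Qed.

End S.

Theorem mainTheorem2 (R : realType) (a0 a1 a2 b0 b1 : R[i])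
  (ha1 : a1 != 0) (ha2 : a2 != 0) (n k : nat) :
  Ttri a0 a1 a2 b0 b1 n k%:Z =
  rising_step (b0 + b1) b1 k / (a1 ^+ k * (k`!)%:R) *
  \sum_(j < k.+1) ((-1) ^+ (k - j) * ('C(k, j))%:R *
     \prod_(1 <= r < n.+1) (a0 + a1 * (j : nat)%:R + r%:R * a2)).
Proof.
rewrite -/(@S R a0 a1 a2 n k).
elim: n k => [|n IH] k.
  rewrite S0 /=; case: k => [|k] /=.
    by rewrite /rising_step big_ord0 expr0 mul1r mul1r invr1 mul1r.
  by rewrite mulr0.
case: k => [|k].
  rewrite S_rec0 /=.
  have -> : (0%:Z - 1 = Negz 0)%R by [].
  rewrite Tneg IH mulr0 addr0 /rising_step big_ord0 expr0 fact0 mul1r; ring.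
rewrite S_rec /=.
have -> : ((k.+1)%:Z - 1 = k%:Z)%R by rewrite -addn1 PoszD addrK.
rewrite !IH.
have hk : ((k`!)%:R : R[i]) != 0 by rewrite pnatr_eq0 -lt0n fact_gt0.
have hk1 : ((k.+1)%:R : R[i]) != 0 by rewrite pnatr_eq0.
rewrite /rising_step big_ord_recr /= factS natrM exprS.
set r := \prod_(i < k) _.
rewrite -!pmulrn.
field.
have hk2 : (1 + k%:R : R[i]) != 0 by rewrite addrC natr1.
by rewrite hk hk2 expf_neq0 // ha1.
Qed.
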